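(* For every $n\ge3$ with $n\neq4$, the unidirectional cycle $\overrightarrow{C_n}$ is $\{0,2\}$-antimagic.
   Context: An oriented graph is a simple graph each of whose edges is given one direction. For vertices $u,v$, $d(u,v)$ is the length of a shortest directed path from $u$ to $v$ ($d(u,u)=0$). For a set $D$ of nonnegative integers, $N_D(v)=\{y : d(v,y)\in D\}$; for a bijection $f:V\to\{1,\dots,|V|\}$, $\omega_D(v)=\sum_{x\in N_D(v)}f(x)$ (empty sum $0$); $f$ is $D$-antimagic if distinct vertices have distinct $D$-weights, and the graph is $D$-antimagic if such an $f$ exists. The unidirectional cycle $\overrightarrow{C_n}$ ($n\ge3$) has vertices $v_1,\dots,v_n$ and arcs $(v_i,v_{i+1})$ for $1\le i\le n-1$ and $(v_n,v_1)$; $d(v_i,v_j)=(j-i)\bmod n$. *)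

(* Defs.v *)
From mathcomp Require Import all_boot.
Set Implicit Arguments. Unset Strict Implicit. Unset Printing Implicit Defensive.

(* Unidirectional cycle C_n on vertices 'I_n (v_{i+1} ~ index i),
   arcs i -> i+1 mod n; directed distance d(v_i,v_j) = (j - i) mod n. *)
Definition cyc_dist (n : nat) (u v : 'I_n) : nat := (v + n - u) %% n.

Definition DNbhd (n : nat) (D : pred nat) (v : 'I_n) : {set 'I_n} :=
  [set y | D (cyc_dist v y)].

Definition Dweight (n : nat) (D : pred nat) (f : 'I_n -> nat) (v : 'I_n) : nat :=
  \sum_(x in DNbhd D v) f x.

Definition is_labelling (n : nat) (f : 'I_n -> nat) : Prop :=
  injective f /\ (forall x, 1 <= f x <= n).

Definition D_antimagic_labelling (n : nat) (D : pred nat) (f : 'I_n -> nat) : Prop :=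
  is_labelling f /\ injective (Dweight D f).

Definition cycle_D_antimagic (n : nat) (D : pred nat) : Prop :=
  exists f : 'I_n -> nat, D_antimagic_labelling D f.

(* Main.v *)
Require Import Defs.
From mathcomp Require Import all_boot zify.
Lemma modsub n a : n <= a -> a < n + n -> a %% n = a - n.
Proof. move=> h1 h2. have -> : a = (a - n) + n by lia. rewrite modnDr modn_small; lia. Qed.
Lemma mod2 n u : 3 <= n -> u < n -> (u+2) %% n = if u+2 < n then u+2 else u+2-n.
Proof. move=> h1 h2; case: ifP => h; [rewrite modn_small //| rewrite modsub]; lia. Qed.
Lemma dist n y v : y < n -> v < n -> (y+n-v)%%n = if v <= y then y-v else y+n-v.
Proof. move=> h1 h2; case: ifP => h; [rewrite modsub| rewrite modn_small]; lia. Qed.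
Lemma d0 n y v : y < n -> v < n -> ((y+n-v)%%n == 0) = (y==v).
Proof. move=> h1 h2; rewrite dist //; case: ifP => h; apply/eqP/eqP; lia. Qed.
Lemma d2 n y v : 3 <= n -> y < n -> v < n -> ((y+n-v)%%n == 2) = (y==(v+2)%%n).
Proof. move=> h0 h1 h2; rewrite dist // mod2 //; case: ifP => h; case: ifP => h'; apply/eqP/eqP; lia. Qed.
Lemma wt n (f : 'I_n -> nat) (v : 'I_n) (h : 3 <= n) :
  Dweight (fun k : nat => (k == 0) || (k == 2)) f v =
  f v + f (Ordinal (@ltn_pmod (v+2) n (ltn_trans (isT : 0 < 2) h))).
Proof.
rewrite /Dweight.
set w := Ordinal _.
have -> : DNbhd (fun k : nat => (k == 0) || (k == 2)) v = [set v; w].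
  apply/setP => y; rewrite !inE /cyc_dist d0 // d2 //.
have vw : v != w.
  apply/eqP => /(congr1 val) /=. rewrite mod2 //. case: ifP; lia.
by rewrite big_setU1 /= ?inE // big_set1.
Qed.
Definition g n i := if odd n then i.+1 else if i == 0 then n else if i == n.-1 then 1 else i.+1.

Definition ge n i := if i == 0 then n else if i == n.-1 then 1 else i.+1.

Lemma Wodd n (x : nat) : 3 <= n -> x < n ->
  x.+1 + ((x+2)%%n).+1 = if x == n-2 then n else if x == n-1 then n+2 else 2*x+4.
Proof.
move=> h3 hx; rewrite mod2 //; case: (ltnP (x+2) n) => h; repeat (case: ifP => /eqP ?); lia.
Qed.

Lemma Weven n (x : nat) : 5 <= n -> x < n ->
  ge n x + ge n ((x+2)%%n) = if x == 0 then n+3 else if x == n-1 then 3 else if x == n-2 then 2*n-1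
     else if x == n-3 then n-1 else 2*x+4.
Proof.
move=> h3 hx; rewrite mod2 // ?/ge; last lia.
case: (ltnP (x+2) n) => h; repeat (case: ifP => /eqP ?); lia.
Qed.
Theorem mainTheorem12 (n : nat) :
  3 <= n -> n != 4 ->
  cycle_D_antimagic n (fun k : nat => (k == 0) || (k == 2)).
Proof.
move=> h3 h4.
have [k [hk hodd]] : exists k, (n = 2*k+1 \/ n = 2*k) /\ (odd n = (n == 2*k+1)).
  have := odd_double_half n; case: (odd n) => /= H; exists n./2; rewrite -muln2 in H; split; lia.
case: (boolP (n == 2*k+1)) => hn.
- exists (fun x : 'I_n => x.+1); split; [split|].
  + by move=> x y /= [] /val_inj.
  + move=> x; have := ltn_ord x; lia.
  + move=> x y; rewrite !wt //= (Wodd _ _ h3 (ltn_ord x)) (Wodd _ _ h3 (ltn_ord y)) => E; apply: ord_inj.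
    move: E; have := ltn_ord x; have := ltn_ord y.
    repeat (case: ifP => /eqP ?); lia.
- have h5 : 5 <= n by lia.
  exists (fun x : 'I_n => ge n x); split; [split|].
  + move=> x y /= E; apply: ord_inj; move: E; have := ltn_ord x; have := ltn_ord y; rewrite /ge.
    repeat (case: ifP => /eqP ?); lia.
  + move=> x; have := ltn_ord x; rewrite /ge; repeat (case: ifP => /eqP ?); lia.
  + move=> x y; rewrite !wt //= (Weven _ _ h5 (ltn_ord x)) (Weven _ _ h5 (ltn_ord y)) => E; apply: ord_inj.
    move: E; have := ltn_ord x; have := ltn_ord y.
    repeat (case: ifP => /eqP ?); lia.
Qed.
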